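(* Let $S$ be a semigroup and $a\in S$ an idempotent with $aSa\subseteq\operatorname{Reg}(S)$; let $P=\{x\in Sa: x\,\mathscr L\,ax\}$, let $H_a$ be the $\mathscr H$-class of $a$ in $S$ (which is the group of units of the monoid $aSa$), and let $\rho$ be the number of $\mathscr R^P$-classes contained in $\widehat R^a_a=\{x\in P: ax\ \mathscr R^{aSa}\ a\}$. Suppose $aSa\setminus H_a$ is an ideal of $aSa$. Then $$\operatorname{rank}(P)\ge \operatorname{rank}(aSa:H_a)+\max(\rho,\operatorname{rank}(H_a)),$$ with equality if $P$ is RI-dominated.
   Context: $P$ is a (regular) subsemigroup of $S$. $\mathscr R^P$, $\mathscr R^{aSa}$ denote Green's $\mathscr R$-relation in $P$ and in $aSa$. For a semigroup $T$, $\operatorname{rank}(T)$ is the minimum cardinality of a generating set, and for $A\subseteq T$, the relative rank $\operatorname{rank}(T:A)$ is the minimum cardinality of $U\subseteq T$ with $T=\langle A\cup U\rangle$. A semigroup $T$ is RI-dominated if for every $x\in T$ there is a right identity $e$ of $T$ (i.e. $ye=y$ for all $y\in T$) with $x\in eT^1$. *)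

(* Defs.v *)
(* abstract (possibly infinite) semigroups, subsets as predicates,
   cardinalities compared via injections between sigma types. *)
From Stdlib Require Import Classical.

Section Semigroup.
Variable S : Type.
Variable mul : S -> S -> S.

Definition sset := S -> Prop.
Definition subset (A B : sset) : Prop := forall x, A x -> B x.
Definition setminus (A B : sset) : sset := fun x => A x /\ ~ B x.

(* Green's relations in S (via principal one-sided ideals of S^1). *)
Definition leR (x y : S) : Prop := x = y \/ exists s, x = mul y s.
Definition leL (x y : S) : Prop := x = y \/ exists s, x = mul s y.
Definition GreenR (x y : S) : Prop := leR x y /\ leR y x.
Definition GreenL (x y : S) : Prop := leL x y /\ leL y x.
Definition GreenH (x y : S) : Prop := GreenR x y /\ GreenL x y.

Definition leR_in (T : sset) (x y : S) : Prop := x = y \/ exists t, T t /\ x = mul y t.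
Definition GreenR_in (T : sset) (x y : S) : Prop :=
  T x /\ T y /\ leR_in T x y /\ leR_in T y x.

Definition regular (x : S) : Prop := exists y, mul (mul x y) x = x.

Definition local (a : S) : sset := fun x => exists s, x = mul (mul a s) a.
Definition rightS (a : S) : sset := fun x => exists s, x = mul s a.
Definition Pset (a : S) : sset := fun x => rightS a x /\ GreenL x (mul a x).
Definition Hclass (a : S) : sset := fun x => GreenH x a.
Definition Rhat (a : S) : sset := fun x => Pset a x /\ GreenR_in (local a) (mul a x) a.

Definition RPclasses_in_Rhat (a : S) : Type :=
  { C : sset | exists x, Pset a x /\ C = (fun y => GreenR_in (Pset a) x y)
                         /\ subset C (Rhat a) }.

Definition ideal_of (T I : sset) : Prop :=
  subset I T /\ forall x y, I x -> T y -> I (mul x y) /\ I (mul y x).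

Inductive gen (A : sset) : sset :=
| gen_base : forall x, A x -> gen A x
| gen_mul : forall x y, gen A x -> gen A y -> gen A (mul x y).

Definition setU (A B : sset) : sset := fun x => A x \/ B x.

Definition generates (T U : sset) : Prop := subset U T /\ forall x, T x -> gen U x.
(* U witnesses the relative rank of T modulo A: T = <A u U> *)
Definition rel_generates (T A U : sset) : Prop :=
  subset U T /\ forall x, T x -> gen (setU A U) x.

Definition RI_dominated (T : sset) : Prop :=
  forall x, T x -> exists e, T e /\ (forall y, T y -> mul y e = y) /\
                          (x = e \/ exists t, T t /\ x = mul e t).

End Semigroup.

Definition sig_of {S : Type} (A : S -> Prop) : Type := { x : S | A x }.
Definition card_le (X Y : Type) : Prop := exists f : X -> Y, forall u v, f u = f v -> u = v.
Arguments subset {S}.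
Arguments setminus {S}.
Arguments setU {S}.

(* Main.v *)
Require Import Defs.
From Stdlib Require Import Classical IndefiniteDescription ProofIrrelevance FunctionalExtensionality PropExtensionality ClassicalDescription.
Module ZAux.
From mathcomp Require Import all_boot boolp classical_sets.
Local Open Scope classical_set_scope.

Lemma min_card_aux (I X : Type) (A : I -> X -> Prop) (i0 : I) :
  exists M : (I -> X) -> Prop,
    (forall t, M t -> forall i, A i (t i)) /\
    (forall t t', M t -> M t' -> (exists i, t i = t' i) -> t = t') /\
    exists m, forall x, A m x -> exists t, M t /\ t m = x.
Proof.
pose P := fun F : set (I -> X) =>
  (forall t, F t -> forall i, A i (t i)) /\
  (forall t t', F t -> F t' -> (exists i, t i = t' i) -> t = t').
have : (forall F : set (set (I -> X)), F `<=` P -> total_on F subset ->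
      P (\bigcup_(Y in F) Y)).
  move=> F FP tot; split.
    by move=> t [Y FY Yt]; exact: (FP Y FY).1.
  move=> t t' [Y FY Yt] [Y' FY' Yt'] e.
  have [sub|sub] := tot _ _ FY FY'.
    exact: (FP Y' FY').2 (sub _ Yt) Yt' e.
  exact: (FP Y FY).2 Yt (sub _ Yt') e.
move=> /Zorn_bigcup [M [[PM1 PM2] Mmax]].
exists M; split => //; split => //.
apply: NNPP => nex.
have H : forall i, exists x, A i x /\ forall t, M t -> t i <> x.
  move=> i; apply: NNPP => nx; apply: nex; exists i => x Ax.
  apply: NNPP => nt; apply: nx; exists x; split => // t Mt e; apply: nt; exists t; split => //.
pose s := fun i => proj1_sig (cid (H i)).
have sP : forall i, A i (s i) /\ forall t, M t -> t i <> s i.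
  by move=> i; exact: (proj2_sig (cid (H i))).
have sM : ~ M s by move=> Ms; exact: ((sP i0).2 s Ms erefl).
apply: (Mmax (fun t => M t \/ t = s)).
  split; first by move=> t Mt; left.
  by move=> /(_ s (or_intror erefl)).
split.
  move=> t [Mt|->]; [exact: PM1 | exact: (fun i => (sP i).1)].
move=> t t' [Mt|->] [Mt'|->] [i e].
- exact: PM2 Mt Mt' (ex_intro _ i e).
- by case: ((sP i).2 t Mt e).
- by case: ((sP i).2 t' Mt' (esym e)).
- by [].
Qed.

Lemma min_card (I X : Type) (A : I -> X -> Prop) (i0 : I) :
  exists m, forall i, exists f : {x | A m x} -> {x | A i x},
     forall u v, f u = f v -> u = v.
Proof.
have [M [M1 [M2 [m Hm]]]] := @min_card_aux I X A i0.
exists m => i.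
pose g := fun u : {x | A m x} => proj1_sig (cid (Hm _ (proj2_sig u))).
have gP : forall u, M (g u) /\ g u m = proj1_sig u.
  by move=> u; exact: (proj2_sig (cid (Hm _ (proj2_sig u)))).
exists (fun u => exist _ (g u i) (M1 _ (gP u).1 i)).
move=> u v e.
have e' : g u i = g v i by move: e => /(congr1 (@proj1_sig _ _)).
have := M2 _ _ (gP u).1 (gP v).1 (ex_intro _ i e') => guv.
move: u v {e} e' guv => [u Pu] [v Pv] /= _ guv.
have : u = v.
  have := (gP (exist _ u Pu)).2; have := (gP (exist _ v Pv)).2.
  rewrite /= guv => -> ->; done.
move=> uv; subst v; congr exist; exact: Prop_irrelevance.
Qed.
End ZAux.

Set Bullet Behavior "Strict Subproofs".

Section Main.
Variable S : Type.
Variable mul : S -> S -> S.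
Hypothesis assoc : forall x y z, mul x (mul y z) = mul (mul x y) z.
Variable a : S.
Hypothesis idem : mul a a = a.

Local Notation "x ** y" := (mul x y) (at level 40, left associativity).
Local Notation L := (local S mul a).
Local Notation P := (Pset S mul a).
Local Notation H := (Hclass S mul a).

Lemma idem_r x : x ** a ** a = x ** a.
Proof. rewrite <- assoc, idem; reflexivity. Qed.

Ltac norm := repeat rewrite assoc; repeat rewrite idem_r; repeat rewrite idem.

Lemma Sa_a x : rightS S mul a x -> x ** a = x.
Proof. intros [s ->]. apply idem_r. Qed.

Lemma P_Sa x : P x -> x ** a = x.
Proof. intros [h _]. apply Sa_a; exact h. Qed.

Lemma L_al x : L x -> a ** x = x.
Proof. intros [s ->]. norm. reflexivity. Qed.

Lemma L_ar x : L x -> x ** a = x.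
Proof. intros [s ->]. norm. reflexivity. Qed.

Lemma L_mul x y : L x -> L y -> L (x ** y).
Proof.
  intros [s ->] [t ->]. exists (s ** a ** t). norm. reflexivity.
Qed.

Lemma L_a : L a.
Proof. exists a. rewrite !idem. reflexivity. Qed.

Lemma L_P x : L x -> P x.
Proof.
  intros Lx. split.
  - destruct Lx as [s ->]. exists (a ** s). reflexivity.
  - rewrite (L_al x Lx). split; left; reflexivity.
Qed.

Lemma P_mul x y : P x -> P y -> P (x ** y).
Proof.
  intros [_ [Hx _]] [[t ey] _]. split.
  - exists (x ** t). rewrite ey, assoc. reflexivity.
  - split.
    + destruct Hx as [e|[c e]].
      * left. rewrite assoc, <- e. reflexivity.
      * right. exists c. rewrite (assoc a x), (assoc c (a ** x)), <- e. reflexivity.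
    + right. exists a. reflexivity.
Qed.

Lemma aP_L x : P x -> L (a ** x).
Proof. intros [[s ->] _]. exists s. rewrite assoc. reflexivity. Qed.

Lemma H_ga g : H g -> g ** a = g.
Proof.
  intros [_ [[e|[s e]] _]].
  - rewrite e, idem; reflexivity.
  - rewrite e; apply idem_r.
Qed.

Lemma H_L g : H g -> L g.
Proof.
  intros Hg. pose proof (H_ga g Hg) as ga. destruct Hg as [[[e|[s e]] _] _].
  - rewrite e; exact L_a.
  - exists s. rewrite <- e. symmetry; exact ga.
Qed.

Lemma H_rinv g : H g -> exists g', L g' /\ g ** g' = a.
Proof.
  intros Hg. pose proof (H_ga g Hg) as ga. destruct Hg as [[_ [e|[s e]]] _].
  - exists a. split; [exact L_a|]. rewrite <- e, idem; reflexivity.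
  - exists (a ** s ** a). split; [exists s; reflexivity|].
    rewrite !assoc, ga, <- e, idem. reflexivity.
Qed.

Lemma H_a : H a.
Proof. split; split; left; reflexivity. Qed.

Lemma hom x y : P x -> a ** (x ** y) = (a ** x) ** (a ** y).
Proof.
  intros Px. rewrite (assoc (a ** x) a y), <- (assoc a x a), (P_Sa x Px), assoc. reflexivity.
Qed.

Lemma gen_closed (A T : sset S) x :
  (forall x, A x -> T x) -> (forall x y, T x -> T y -> T (x ** y)) -> gen S mul A x -> T x.
Proof. intros hA hT g. induction g; auto. Qed.

Lemma gen_gen (A B : sset S) x :
  (forall x, A x -> gen S mul B x) -> gen S mul A x -> gen S mul B x.
Proof. intros hA g. induction g; auto. apply gen_mul; auto. Qed.

Lemma gen_mono (A B : sset S) x :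
  (forall x, A x -> B x) -> gen S mul A x -> gen S mul B x.
Proof. intros hA. apply gen_gen. intros y h. apply gen_base; auto. Qed.

Lemma GR_refl x : P x -> GreenR_in S mul P x x.
Proof. intros Px. split; [exact Px|]. split; [exact Px|]. split; left; reflexivity. Qed.

Lemma GR_sym x y : GreenR_in S mul P x y -> GreenR_in S mul P y x.
Proof. intros [? [? [? ?]]]. split; [assumption|]. split; [assumption|]. split; assumption. Qed.

Lemma leR_trans x y z : leR_in S mul P x y -> leR_in S mul P y z -> leR_in S mul P x z.
Proof.
  intros [e|[t [Pt e]]] [e'|[t' [Pt' e']]].
  - left; congruence.
  - right; exists t'; split; [exact Pt'|congruence].
  - right; exists t; split; [exact Pt|congruence].
  - right; exists (t' ** t). split; [apply P_mul; auto|]. rewrite assoc, <- e'; exact e.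
Qed.

Lemma GR_trans x y z : GreenR_in S mul P x y -> GreenR_in S mul P y z -> GreenR_in S mul P x z.
Proof.
  intros [? [? [? ?]]] [? [? [? ?]]]. split; [assumption|]. split; [assumption|]. split; eapply leR_trans; eauto.
Qed.

Hypothesis hideal : ideal_of S mul L (setminus L H).

Lemma ideal_split x y : L x -> L y -> H (x ** y) -> H x /\ H y.
Proof.
  intros Lx Ly Hxy. destruct hideal as [_ hI]. split.
  - apply NNPP; intros nH. destruct (hI x y (conj Lx nH) Ly) as [[_ n] _]. auto.
  - apply NNPP; intros nH. destruct (hI y x (conj Ly nH) Lx) as [_ [_ n]]. auto.
Qed.

Lemma Rhat_H x : Rhat S mul a x -> H (a ** x).
Proof.
  intros [_ [Lax [_ [_ hle]]]]. destruct hideal as [_ hI].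
  apply NNPP; intros nH. destruct hle as [e|[t [Lt e]]].
  - apply nH; rewrite <- e; exact H_a.
  - destruct (hI _ _ (conj Lax nH) Lt) as [[_ n] _]. rewrite <- e in n. apply n; exact H_a.
Qed.

Lemma H_Rhat x : P x -> H (a ** x) -> Rhat S mul a x.
Proof.
  intros Px Hax. split; [exact Px|]. split; [apply H_L; exact Hax|]. split; [exact L_a|].
  split.
  - right. exists (a ** x). split; [apply H_L; exact Hax|]. rewrite assoc, idem; reflexivity.
  - destruct (H_rinv _ Hax) as [g' [Lg' e]]. right. exists g'. split; auto.
Qed.


Lemma first_factor (U : sset S) y :
  (forall x, U x -> P x) -> gen S mul U y ->
  exists u, U u /\ (y = u \/ exists p, P p /\ y = u ** p).
Proof.
  intros hUP g. induction g as [x Ux|x y gx IHx gy IHy].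
  - exists x. split; auto.
  - assert (Py : P y) by (apply (gen_closed U P y); auto; intros; apply P_mul; auto).
    destruct IHx as [u [Uu [e|[p [Pp e]]]]]; exists u; split; auto; right.
    + exists y. split; auto. rewrite e; reflexivity.
    + exists (p ** y). split; [apply P_mul; auto|]. rewrite e, assoc; reflexivity.
Qed.

Lemma key_R x0 u : Rhat S mul a x0 -> P u -> (x0 = u \/ exists p, P p /\ x0 = u ** p) ->
  H (a ** u) /\ GreenR_in S mul P u x0.
Proof.
  intros Rx Pu [e|[p [Pp e]]].
  - subst. split; [apply Rhat_H; exact Rx| apply GR_refl; exact Pu].
  - pose proof (Rhat_H _ Rx) as Hax. rewrite e, hom in Hax by exact Pu.
    destruct (ideal_split _ _ (aP_L _ Pu) (aP_L _ Pp) Hax) as [Hu Hp].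
    split; [exact Hu|].
    destruct (H_rinv _ Hp) as [q [Lq eq]].
    split; [exact Pu|]. split; [rewrite e; apply P_mul; auto|]. split.
    + right. exists q. split; [apply L_P; exact Lq|].
      rewrite e. rewrite <- (P_Sa u Pu) at 2. rewrite <- (assoc u a p), <- (assoc u (a ** p) q), eq.
      symmetry; apply P_Sa; exact Pu.
    + right. exists p. split; auto.
Qed.

Lemma part1 (U : sset S) : generates S mul P U ->
  (exists V, rel_generates S mul L H V /\
        card_le (sig_of V + RPclasses_in_Rhat S mul a) (sig_of U)) /\
  (exists V W, rel_generates S mul L H V /\
        generates S mul H W /\
        card_le (sig_of V + sig_of W) (sig_of U)).
Proof.
  intros [hUP hPU].
  pose (phiU := fun v => exists u, U u /\ v = a ** u).
  assert (genUP : forall y, gen S mul U y -> P y).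
  { intros y; apply gen_closed; [exact hUP | intros; apply P_mul; auto]. }
  assert (phiL : forall v, phiU v -> L v).
  { intros v [u [Uu ->]]; apply aP_L, hUP, Uu. }
  assert (phigen : forall y, gen S mul U y -> gen S mul phiU (a ** y)).
  { intros y g; induction g.
    - apply gen_base; exists x; auto.
    - rewrite hom by (apply genUP; auto). apply gen_mul; auto. }
  assert (Lgen : forall x, L x -> gen S mul phiU x).
  { intros x Lx. rewrite <- (L_al x Lx). apply phigen, hPU, L_P, Lx. }
  pose (V := fun v => phiU v /\ ~ H v).
  assert (relV : rel_generates S mul L H V).
  { split.
    - intros v [h _]; apply phiL, h.
    - intros x Lx. apply (gen_mono phiU); [|apply Lgen, Lx].
      intros v hv. destruct (classic (H v)) as [h|h]; [left; exact h | right; split; auto]. }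
  assert (exV : exists fV : sig_of V -> S, forall v, U (fV v) /\ proj1_sig v = a ** fV v).
  { exists (fun v : sig_of V => proj1_sig (constructive_indefinite_description (fun u => U u /\ proj1_sig v = a ** u) (proj1 (proj2_sig v)))).
    intros v. exact (proj2_sig (constructive_indefinite_description (fun u => U u /\ proj1_sig v = a ** u) (proj1 (proj2_sig v)))). }
  destruct exV as [fV fVs].
  split.
  - exists V. split; [exact relV|].
    assert (clpick : forall C : RPclasses_in_Rhat S mul a, exists u, U u /\ H (a ** u) /\
               proj1_sig C = (fun y => GreenR_in S mul P u y)).
    { intros [C [x0 [Px0 [eC sub]]]]. simpl.
      assert (Rx0 : Rhat S mul a x0) by (apply sub; rewrite eC; apply GR_refl; exact Px0).
      destruct (first_factor U x0 hUP (hPU x0 Px0)) as [u [Uu hu]].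
      destruct (key_R x0 u Rx0 (hUP u Uu) hu) as [Hu Ru].
      exists u. split; [exact Uu|]. split; [exact Hu|].
      rewrite eC. apply functional_extensionality. intros y.
      apply propositional_extensionality. split; intros h.
      - eapply GR_trans; [exact Ru| exact h].
      - eapply GR_trans; [apply GR_sym; exact Ru| exact h]. }
    assert (exC : exists fC : RPclasses_in_Rhat S mul a -> S, forall C, U (fC C) /\ H (a ** fC C) /\
               proj1_sig C = (fun y => GreenR_in S mul P (fC C) y)).
    { exists (fun C => proj1_sig (constructive_indefinite_description _ (clpick C))).
      intros C. exact (proj2_sig (constructive_indefinite_description _ (clpick C))). }
    destruct exC as [fC fCs].
    pose (g := fun s => match s with inl v => fV v | inr C => fC C end).
    assert (gU : forall s, U (g s)) by (intros [v|C]; simpl; [apply fVs|apply fCs]).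
    exists (fun s => exist _ (g s) (gU s)).
    intros s s' e. apply (f_equal (@proj1_sig _ _)) in e. simpl in e.
    destruct s as [v|C], s' as [v'|C']; simpl in e.
    + f_equal. destruct (fVs v) as [_ e1], (fVs v') as [_ e2].
      destruct v as [v hv], v' as [v' hv']. simpl in *.
      assert (v = v') by congruence. subst v'. f_equal. apply proof_irrelevance.
    + exfalso. destruct (fVs v) as [_ e1]. destruct (fCs C') as [_ [h _]].
      apply (proj2 (proj2_sig v)). rewrite e1, e. exact h.
    + exfalso. destruct (fVs v') as [_ e1]. destruct (fCs C) as [_ [h _]].
      apply (proj2 (proj2_sig v')). rewrite e1, <- e. exact h.
    + f_equal. destruct (fCs C) as [_ [_ e1]], (fCs C') as [_ [_ e2]].
      destruct C as [C hC], C' as [C' hC']. simpl in *.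
      assert (C = C') by (rewrite e1, e2, e; reflexivity). subst C'. f_equal. apply proof_irrelevance.
  - pose (W := fun v => phiU v /\ H v).
    exists V, W. split; [exact relV|]. split.
    + split; [intros v [_ h]; exact h|].
      assert (Wgen : forall y, gen S mul phiU y -> H y -> gen S mul W y).
      { intros y g. induction g as [x hx|x y gx IHx gy IHy]; intros Hy.
        - apply gen_base; split; auto.
        - assert (Lx : L x) by (apply (gen_closed phiU L x); auto; intros; apply L_mul; auto).
          assert (Ly : L y) by (apply (gen_closed phiU L y); auto; intros; apply L_mul; auto).
          destruct (ideal_split x y Lx Ly Hy). apply gen_mul; auto. }
      intros x Hx. apply Wgen; [apply Lgen, H_L, Hx | exact Hx].
    + assert (exW : exists fW : sig_of W -> S, forall w, U (fW w) /\ proj1_sig w = a ** fW w).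
      { exists (fun v : sig_of W => proj1_sig (constructive_indefinite_description (fun u => U u /\ proj1_sig v = a ** u) (proj1 (proj2_sig v)))).
        intros v. exact (proj2_sig (constructive_indefinite_description (fun u => U u /\ proj1_sig v = a ** u) (proj1 (proj2_sig v)))). }
      destruct exW as [fW fWs].
      pose (g := fun s => match s with inl v => fV v | inr w => fW w end).
      assert (gU : forall s, U (g s)) by (intros [v|w]; simpl; [apply fVs|apply fWs]).
      exists (fun s => exist _ (g s) (gU s)).
      intros s s' e. apply (f_equal (@proj1_sig _ _)) in e. simpl in e.
      destruct s as [v|w], s' as [v'|w']; simpl in e.
      * f_equal. destruct (fVs v) as [_ e1], (fVs v') as [_ e2].
        destruct v as [v hv], v' as [v' hv']. simpl in *.
        assert (v = v') by congruence. subst v'. f_equal. apply proof_irrelevance.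
      * exfalso. destruct (fVs v) as [_ e1]. destruct (fWs w') as [_ e2].
        apply (proj2 (proj2_sig v)). rewrite e1, e, <- e2. exact (proj2 (proj2_sig w')).
      * exfalso. destruct (fVs v') as [_ e1]. destruct (fWs w) as [_ e2].
        apply (proj2 (proj2_sig v')). rewrite e1, <- e, <- e2. exact (proj2 (proj2_sig w)).
      * f_equal. destruct (fWs w) as [_ e1], (fWs w') as [_ e2].
        destruct w as [w hw], w' as [w' hw']. simpl in *.
        assert (w = w') by congruence. subst w'. f_equal. apply proof_irrelevance.
Qed.


Lemma gen_nonempty (W : sset S) x : gen S mul W x -> exists w, W w.
Proof. intros g; induction g; eauto. Qed.

Lemma gen2 (V0 W0 : sset S) (R : S -> S -> Prop) :
  RI_dominated S mul P -> rel_generates S mul L H V0 -> generates S mul H W0 ->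
  (forall w, W0 w -> exists x, P x /\ a ** x = a /\ R x w) ->
  (forall x, P x -> a ** x = a -> exists w, W0 w /\ R x w) ->
  generates S mul P (fun z => V0 z \/ exists x w, P x /\ a ** x = a /\ W0 w /\ R x w /\ z = x ** w).
Proof.
  intros RI [hV0L hV0] [hW0H hW0] hRw hRx.
  pose (U := fun z => V0 z \/ exists x w, P x /\ a ** x = a /\ W0 w /\ R x w /\ z = x ** w).
  assert (UP : forall z, U z -> P z).
  { intros z [hv|[x [w [Px [_ [Ww [_ ->]]]]]]].
    - apply L_P, hV0L, hv.
    - apply P_mul; [exact Px| apply L_P, H_L, hW0H, Ww]. }
  split; [exact UP|].
  assert (genUP : forall y, gen S mul U y -> P y).
  { intros y; apply gen_closed; [exact UP | intros; apply P_mul; auto]. }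
  assert (LG : forall s, L s -> gen S mul (setU W0 V0) s).
  { intros s Ls. apply (gen_gen (setU H V0)); [| apply hV0, Ls].
    intros y [hy|hy].
    - apply (gen_mono W0); [intros; left; auto| apply hW0, hy].
    - apply gen_base; right; exact hy. }
  assert (C : forall s, gen S mul (setU W0 V0) s -> forall y, gen S mul U y -> gen S mul U (y ** s)).
  { intros s g. induction g as [s [hw|hv]|s1 s2 g1 IH1 g2 IH2]; intros y gy.
    - destruct (hRw s hw) as [x [Px [ax Rxs]]].
      assert (Zz : U (x ** s)).
      { right; exists x, s; split; [exact Px|split; [exact ax|split;[exact hw|split;[exact Rxs|reflexivity]]]]. }
      assert (az : a ** (x ** s) = s) by (rewrite assoc, ax; apply L_al, H_L, hW0H, hw).
      rewrite <- az, assoc, (P_Sa y (genUP y gy)). apply gen_mul; [exact gy| apply gen_base; exact Zz].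
    - apply gen_mul; [exact gy | apply gen_base; left; exact hv].
    - rewrite assoc. apply IH2, IH1, gy. }
  intros x Px. destruct (RI x Px) as [e [Pe [rid hx]]].
  assert (ae : a ** e = a) by (apply rid; apply L_P, L_a).
  destruct (hRx e Pe ae) as [w [Ww Rew]].
  assert (Zz : U (e ** w)).
  { right; exists e, w; split; [exact Pe|split; [exact ae|split;[exact Ww|split;[exact Rew|reflexivity]]]]. }
  destruct (H_rinv w (hW0H w Ww)) as [w' [Lw' ew']].
  assert (ee : e = e ** w ** w') by (rewrite <- assoc, ew', P_Sa; auto).
  destruct hx as [-> | [t [Pt ->]]].
  - rewrite ee. apply C; [apply LG, Lw' | apply gen_base, Zz].
  - assert (E : e ** t = e ** w ** (w' ** (a ** t))).
    { rewrite assoc, <- ee, assoc, (P_Sa e Pe). reflexivity. }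
    rewrite E. apply C; [apply LG, L_mul; [exact Lw'| apply aP_L, Pt] | apply gen_base, Zz].
Qed.

Lemma F_eq x w x' w' p : P x -> a ** x = a -> P x' -> a ** x' = a -> H w' -> P p ->
  x' ** w' = x ** w ** p -> x' = x.
Proof.
  intros Px ax Px' ax' Hw' Pp E.
  destruct (H_rinv w' Hw') as [w'' [Lw'' ew'']].
  assert (e1 : x' = x ** (w ** p ** w'')).
  { transitivity (x' ** (w' ** w'')).
    - rewrite ew''. symmetry; apply P_Sa, Px'.
    - rewrite assoc, E, !assoc. reflexivity. }
  assert (e2 : a = a ** (w ** p ** w'')).
  { transitivity (a ** x'); [symmetry; exact ax'|]. rewrite e1, assoc, ax. reflexivity. }
  rewrite e1. transitivity (x ** a ** (w ** p ** w'')).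
  - rewrite (P_Sa x Px). reflexivity.
  - rewrite <- assoc, <- e2. apply P_Sa, Px.
Qed.

Lemma sig_eq_proj (A : S -> Prop) (u v : sig A) : proj1_sig u = proj1_sig v -> u = v.
Proof.
  destruct u as [u hu], v as [v hv]. simpl. intros ->. f_equal. apply proof_irrelevance.
Qed.


Lemma part2 : RI_dominated S mul P ->
     exists U, generates S mul P U /\
       forall V W, rel_generates S mul L H V ->
         generates S mul H W ->
         (card_le (sig_of U) (sig_of V + RPclasses_in_Rhat S mul a) \/
          card_le (sig_of U) (sig_of V + sig_of W)).
Proof.
  intros RI.
  assert (relL : rel_generates S mul L H L).
  { split; [intros x h; exact h| intros x Lx; apply gen_base; right; exact Lx]. }
  assert (genH : generates S mul H H).
  { split; [intros x h; exact h| intros x Hx; apply gen_base; exact Hx]. }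
  destruct (ZAux.min_card {V | rel_generates S mul L H V} S (fun i => proj1_sig i) (exist _ L relL))
    as [[V0 relV0] hV0].
  destruct (ZAux.min_card {W | generates S mul H W} S (fun i => proj1_sig i) (exist _ H genH))
    as [[W0 genW0] hW0].
  simpl in hV0, hW0.
  pose (F := fun x => P x /\ a ** x = a).
  destruct (ZAux.min_card bool S (fun b => if b then F else W0) true) as [[|] hcmp].
  - (* F injects into W0 *)
    destruct (hcmp false) as [iota iinj]. simpl in iota, iinj.
    pose (R := fun x w => (exists hx : F x, proj1_sig (iota (exist _ x hx)) = w) \/
                 (x = a /\ ~ exists x' (hx' : F x'), proj1_sig (iota (exist _ x' hx')) = w)).
    pose (U := fun z => V0 z \/ exists x w, P x /\ a ** x = a /\ W0 w /\ R x w /\ z = x ** w).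
    exists U. split.
    + apply (gen2 V0 W0 R RI relV0 genW0).
      * intros w Ww. destruct (classic (exists x' (hx' : F x'), proj1_sig (iota (exist _ x' hx')) = w))
          as [[x' [hx' e]]|n].
        -- exists x'. split; [exact (proj1 hx')|]. split; [exact (proj2 hx')|].
           left; exists hx'; exact e.
        -- exists a. split; [apply L_P, L_a|]. split; [exact idem|]. right; split; auto.
      * intros x Px ax. exists (proj1_sig (iota (exist _ x (conj Px ax)))).
        split; [exact (proj2_sig _)|]. left; exists (conj Px ax); reflexivity.
    + intros V W relV genW. right.
      destruct (hV0 (exist _ V relV)) as [fV fVi]. destruct (hW0 (exist _ W genW)) as [fW fWi].
      simpl in fV, fVi, fW, fWi.
      assert (ZW : forall z, U z -> ~ V0 z -> W0 (a ** z)).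
      { intros z [h|[x [w [Px [ax [Ww [_ ->]]]]]]] n; [contradiction|].
        rewrite assoc, ax, L_al; [exact Ww| apply H_L, (proj1 genW0), Ww]. }
      exists (fun u : sig_of U => match excluded_middle_informative (V0 (proj1_sig u)) with
        | left h => inl (fV (exist _ (proj1_sig u) h))
        | right h => inr (fW (exist _ (a ** proj1_sig u) (ZW _ (proj2_sig u) h))) end).
      intros [u hu] [u' hu'] e. simpl in e. apply sig_eq_proj. simpl.
      destruct (excluded_middle_informative (V0 u)), (excluded_middle_informative (V0 u'));
        try discriminate.
      * injection e as e. apply fVi in e. apply (f_equal (@proj1_sig _ _)) in e. exact e.
      * injection e as e. apply fWi in e. apply (f_equal (@proj1_sig _ _)) in e. simpl in e.
        destruct hu as [h|[x [w [Px [ax [Ww [Rxw ->]]]]]]]; [contradiction|].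
        destruct hu' as [h|[x' [w' [Px' [ax' [Ww' [Rxw' ->]]]]]]]; [contradiction|].
        assert (aw : forall y v, a ** y = a -> W0 v -> a ** (y ** v) = v).
        { intros y v ay Wv. rewrite assoc, ay. apply L_al, H_L, (proj1 genW0), Wv. }
        rewrite (aw x w ax Ww), (aw x' w' ax' Ww') in e. subst w'.
        assert (x = x').
        { destruct Rxw as [[hx e1]|[ea n1]], Rxw' as [[hx' e2]|[ea' n2]].
          - assert (ee : exist _ x hx = exist F x' hx').
            { apply iinj. apply sig_eq_proj. congruence. }
            apply (f_equal (@proj1_sig _ _)) in ee. exact ee.
          - exfalso; apply n2; exists x, hx; exact e1.
          - exfalso; apply n1; exists x', hx'; exact e2.
          - congruence. }
        subst x'. reflexivity.
  - (* W0 injects into F *)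
    destruct (hcmp true) as [kap kinj]. simpl in kap, kinj.
    destruct (gen_nonempty W0 a (proj2 genW0 a H_a)) as [w0 Ww0].
    pose (R := fun x w => (exists hw : W0 w, proj1_sig (kap (exist _ w hw)) = x) \/
                 (w = w0 /\ ~ exists w' (hw' : W0 w'), proj1_sig (kap (exist _ w' hw')) = x)).
    assert (Rfun : forall x w w', R x w -> R x w' -> w = w').
    { intros x w w' [[hw e1]|[ew n]] [[hw' e2]|[ew' n']].
      - assert (ee : exist _ w hw = exist W0 w' hw').
        { apply kinj. apply sig_eq_proj. transitivity x; [exact e1| symmetry; exact e2]. }
        apply (f_equal (@proj1_sig _ _)) in ee. exact ee.
      - exfalso; apply n'; exists w, hw; exact e1.
      - exfalso; apply n; exists w', hw'; exact e2.
      - congruence. }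
    pose (U := fun z => V0 z \/ exists x w, P x /\ a ** x = a /\ W0 w /\ R x w /\ z = x ** w).
    assert (UP : forall z, U z -> P z).
    { intros z [hv|[x [w [Px [_ [Ww [_ ->]]]]]]].
      - apply L_P, (proj1 relV0), hv.
      - apply P_mul; [exact Px| apply L_P, H_L, (proj1 genW0), Ww]. }
    exists U. split.
    + apply (gen2 V0 W0 R RI relV0 genW0).
      * intros w Ww. exists (proj1_sig (kap (exist _ w Ww))).
        destruct (proj2_sig (kap (exist _ w Ww))) as [h1 h2].
        split; [exact h1|]. split; [exact h2|]. left; exists Ww; reflexivity.
      * intros x Px ax. destruct (classic (exists w' (hw' : W0 w'), proj1_sig (kap (exist _ w' hw')) = x))
          as [[w' [hw' e]]|n].
        -- exists w'. split; [exact hw'|]. left; exists hw'; exact e.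
        -- exists w0. split; [exact Ww0|]. right; split; auto.
    + intros V W relV genW. left.
      destruct (hV0 (exist _ V relV)) as [fV fVi]. simpl in fV, fVi.
      assert (clOK : forall u, U u -> ~ V0 u ->
        exists x, P x /\ (fun y => GreenR_in S mul P u y) = (fun y => GreenR_in S mul P x y)
           /\ subset (fun y => GreenR_in S mul P u y) (Rhat S mul a)).
      { intros u hu n. exists u. split; [apply UP, hu|]. split; [reflexivity|].
        destruct hu as [h|[x [w [Px [ax [Ww [Rxw ->]]]]]]]; [contradiction|].
        intros y [_ [Py [hle _]]]. apply H_Rhat; [exact Py|].
        assert (Hu : H (a ** (x ** w))).
        { rewrite assoc, ax, L_al; [apply (proj1 genW0), Ww| apply H_L, (proj1 genW0), Ww]. }
        destruct hle as [e|[q [Pq e]]].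
        - rewrite <- e; exact Hu.
        - rewrite e, hom in Hu by exact Py.
          exact (proj1 (ideal_split _ _ (aP_L _ Py) (aP_L _ Pq) Hu)). }
      exists (fun u : sig_of U => match excluded_middle_informative (V0 (proj1_sig u)) with
        | left h => inl (fV (exist _ (proj1_sig u) h))
        | right h => inr (exist _ (fun y => GreenR_in S mul P (proj1_sig u) y)
                              (clOK _ (proj2_sig u) h)) end).
      intros [u hu] [u' hu'] e. simpl in e. apply sig_eq_proj. simpl.
      destruct (excluded_middle_informative (V0 u)), (excluded_middle_informative (V0 u'));
        try discriminate.
      * injection e as e. apply fVi in e. apply (f_equal (@proj1_sig _ _)) in e. exact e.
      * injection e as e.
        assert (Ru : GreenR_in S mul P u u').
        { pose proof (f_equal (fun C : sset S => C u') e) as h2. simpl in h2. rewrite h2.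
          apply GR_refl, UP, hu'. }
        destruct Ru as [_ [_ [_ hle]]].
        destruct hle as [e'|[p [Pp e']]]; [symmetry; exact e'|].
        destruct hu as [h|[x [w [Px [ax [Ww [Rxw ->]]]]]]]; [contradiction|].
        destruct hu' as [h|[x' [w' [Px' [ax' [Ww' [Rxw' ->]]]]]]]; [contradiction|].
        assert (xx : x' = x).
        { apply (F_eq x w x' w' p Px ax Px' ax' (proj1 genW0 w' Ww') Pp e'). }
        subst x'. rewrite (Rfun x w w' Rxw Rxw'). reflexivity.
Qed.

End Main.

Theorem theorem3p27 (S : Type) (mul : S -> S -> S)
  (assoc : forall x y z, mul x (mul y z) = mul (mul x y) z)
  (a : S) (idem : mul a a = a)
  (hreg : forall x, local S mul a x -> regular S mul x)
  (hideal : ideal_of S mul (local S mul a) (setminus (local S mul a) (Hclass S mul a))) :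
  (* rank(P) >= rank(aSa : H_a) + max(rho, rank(H_a)) *)
  (forall U, generates S mul (Pset S mul a) U ->
     (exists V, rel_generates S mul (local S mul a) (Hclass S mul a) V /\
        card_le (sig_of V + RPclasses_in_Rhat S mul a) (sig_of U)) /\
     (exists V W, rel_generates S mul (local S mul a) (Hclass S mul a) V /\
        generates S mul (Hclass S mul a) W /\
        card_le (sig_of V + sig_of W) (sig_of U)))
  /\
  (* equality when P is RI-dominated *)
  (RI_dominated S mul (Pset S mul a) ->
     exists U, generates S mul (Pset S mul a) U /\
       forall V W, rel_generates S mul (local S mul a) (Hclass S mul a) V ->
         generates S mul (Hclass S mul a) W ->
         (card_le (sig_of U) (sig_of V + RPclasses_in_Rhat S mul a) \/
          card_le (sig_of U) (sig_of V + sig_of W))).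
Proof.
  split.
  - intros U hU. exact (part1 S mul assoc a idem hideal U hU).
  - intros RI. exact (part2 S mul assoc a idem hideal RI).
Qed.
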